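(* Let $f$, $\mathcal{I}$, and the notation for streams be as in the context, and let $0 < c \le 1$ and $\epsilon > 0$. Let $\mathcal{A}$ be a $c$-compliant algorithm. Let $S_1, S_2, S_3$ be finite streams and suppose $\mathcal{A}(S_1\circ S_2) \le (1+\epsilon)\,\mathcal{A}(S_2)$. Then $$\mathcal{A}(S_2\circ S_3) \ge \frac{c}{2+\epsilon}\, f(\mathtt{OPT}_{123}),$$ where $\mathtt{OPT}_{123}$ is an optimal solution for the stream $S_1\circ S_2\circ S_3$.
   Context: Let $U$ be a finite set of items and $f: 2^U \to \mathbb{R}_{\ge 0}$ a nonnegative submodular function, i.e. $f(A\cup\{v\}) - f(A) \ge f(B\cup\{v\}) - f(B)$ for all $A\subseteq B\subset U$ and $v\in U\setminus B$. Let $\mathcal{I}\subseteq 2^U$ be a hereditary constraint: $A\in\mathcal{I}$ and $A'\subseteq A$ imply $A'\in\mathcal{I}$ (with $\emptyset\in\mathcal{I}$). A stream is a finite sequence of items of $U$; $S_1\circ S_2$ denotes concatenation ($S_1$ followed by $S_2$). For a stream $S$, an optimal solution $\mathtt{OPT}_S$ is a set maximizing $f$ over all sets in $\mathcal{I}$ consisting of items occurring in $S$. An algorithm $\mathcal{A}$ maps each stream $S$ to a set in $\mathcal{I}$ consisting of items occurring in $S$; $\mathcal{A}(S)$ denotes the $f$-value of that set. $\mathcal{A}$ is $c$-compliant if (Monotonicity) whenever $S_1$ is a prefix of $S_2$, $\mathcal{A}(S_1)\le\mathcal{A}(S_2)$; and ($c$-Approximation) for every stream $S$, $\mathcal{A}(S)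 \ge c\cdot f(\mathtt{OPT}_S)$. *)

(* Defs.v *)
From HB Require Import structures.
From mathcomp Require Import all_boot all_order all_algebra.
Set Implicit Arguments. Unset Strict Implicit. Unset Printing Implicit Defensive.
Import Order.TTheory GRing.Theory Num.Theory.
Local Open Scope ring_scope.

Section Defs.
Variables (R : realFieldType) (T : finType).

Definition nonneg_fun (f : {set T} -> R) : Prop := forall A, 0 <= f A.

Definition submodular (f : {set T} -> R) : Prop :=
  forall (A B : {set T}) (v : T), A \subset B -> v \notin B ->
    f (v |: B) - f B <= f (v |: A) - f A.

Definition hereditary (I : pred {set T}) : Prop :=
  I set0 /\ forall A A' : {set T}, I A -> A' \subset A -> I A'.

Definition items (S : seq T) : {set T} := [set x | x \in S].

Definition is_opt (f : {set T} -> R) (I : pred {set T}) (S : seq T)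
  (X : {set T}) : Prop :=
  [/\ I X, X \subset items S &
      forall Y : {set T}, I Y -> Y \subset items S -> f Y <= f X].

Definition valid_alg (I : pred {set T}) (alg : seq T -> {set T}) : Prop :=
  forall S, I (alg S) /\ alg S \subset items S.

(* c-compliance; A(S) denotes f (alg S) *)
Definition compliant (f : {set T} -> R) (I : pred {set T}) (c : R)
  (alg : seq T -> {set T}) : Prop :=
  (forall S1 S2 : seq T, prefix S1 S2 -> f (alg S1) <= f (alg S2)) /\
  (forall (S : seq T) (X : {set T}), is_opt f I S X -> c * f X <= f (alg S)).

End Defs.

(* Main.v *)
Require Import Defs.
From HB Require Import structures.
From mathcomp Require Import all_boot all_order all_algebra.
From mathcomp Require Import lra.
Import Order.TTheory GRing.Theory Num.Theory.
Local Open Scope ring_scope.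

Lemma subadd (R : realFieldType) (T : finType) (f : {set T} -> R) :
  nonneg_fun f -> submodular f ->
  forall n (X Y : {set T}), #|Y| = n -> [disjoint X & Y] -> f (X :|: Y) <= f X + f Y.
Proof.
move=> f0 sf; elim=> [|n IH] X Y cY dXY.
  move/eqP: cY; rewrite cards_eq0 => /eqP ->.
  by rewrite setU0 lerDl.
have : Y != set0 by apply/eqP => Y0; rewrite Y0 cards0 in cY.
case/set0Pn => v vY.
have cY' : #|Y :\ v| = n by move: cY; rewrite (cardsD1 v Y) vY add1n => /eqP; rewrite eqSS => /eqP.
have dXY' : [disjoint X & Y :\ v].
  by apply: disjointWr dXY; apply: subsetDl.
have vX : v \notin X :|: (Y :\ v).
  rewrite in_setU in_setD1 eqxx /= orbF.
  by apply/negP => vX; move/disjointFr: dXY => /(_ v vX); rewrite vY.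
have H := sf (Y :\ v) (X :|: (Y :\ v)) v (subsetUr _ _) vX.
have E1 : X :|: Y = v |: (X :|: (Y :\ v)).
  by rewrite setUCA setD1K.
have E2 : Y = v |: (Y :\ v) by rewrite (setD1K vY).
rewrite E1 {2}E2.
have H2 := IH X (Y :\ v) cY' dXY'.
lra.
Qed.

Lemma opt_exists (R : realFieldType) (T : finType) (f : {set T} -> R)
  (I : pred {set T}) (S : seq T) :
  hereditary I -> exists X, is_opt f I S X.
Proof.
move=> [I0 _].
have P0 : (fun Y : {set T} => I Y && (Y \subset items S)) set0.
  by rewrite /= I0 sub0set.
case: (@arg_maxP _ _ _ set0 (fun Y : {set T} => I Y && (Y \subset items S)) f P0) => X /andP [IX sX] Hmax.
exists X; split => // Y IY sY.
by apply: Hmax; rewrite IY sY.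
Qed.

Theorem lemma1 (R : realFieldType) (T : finType) (f : {set T} -> R)
  (I : pred {set T}) (c eps : R) (alg : seq T -> {set T})
  (S1 S2 S3 : seq T) (O123 : {set T}) :
  nonneg_fun f -> submodular f -> hereditary I ->
  0 < c -> c <= 1 -> 0 < eps ->
  valid_alg I alg -> compliant f I c alg ->
  f (alg (S1 ++ S2)) <= (1 + eps) * f (alg S2) ->
  is_opt f I (S1 ++ S2 ++ S3) O123 ->
  c / (2 + eps) * f O123 <= f (alg (S2 ++ S3)).
Proof.
move=> f0 sf hI c0 c1 e0 va [mono appr] H12 [IO sO Oopt].
set X := O123 :&: items S1.
set Y := O123 :\: items S1.
have EO : O123 = X :|: Y by rewrite setID.
have dXY : [disjoint X & Y].
  rewrite disjoint_subset. apply/subsetP. intros z. rewrite /X /Y !inE.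
  by case: (z \in S1); rewrite ?andbF ?andbT.
have fO : f O123 <= f X + f Y by rewrite {1}EO; exact: (@subadd _ _ f f0 sf #|Y| X Y erefl dXY).
have [X12 [I12 s12 opt12]] := @opt_exists _ _ f I (S1 ++ S2) hI.
have [X23 [I23 s23 opt23]] := @opt_exists _ _ f I (S2 ++ S3) hI.
have hX : f X <= f X12.
  apply: opt12; first by apply: (hI.2 _ _ IO); exact: subsetIl.
  apply/subsetP => x; rewrite !inE mem_cat => /andP [_ ->] //.
have hY : f Y <= f X23.
  apply: opt23; first by apply: (hI.2 _ _ IO); exact: subsetDl.
  apply/subsetP => x; rewrite !inE => /andP [nx xO].
  move/subsetP: sO => /(_ x xO); rewrite !inE !mem_cat.
  by move: nx; case: (x \in S1).
have a12 := appr _ _ (And3 I12 s12 opt12).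
have a23 := appr _ _ (And3 I23 s23 opt23).
have m23 : f (alg S2) <= f (alg (S2 ++ S3)) by apply: mono; exact: prefix_prefix.
have fX0 := f0 X; have fY0 := f0 Y; have fa2 := f0 (alg S2).
have k1 : c * f X <= c * f X12 by rewrite ler_pM2l.
have k2 : c * f Y <= c * f X23 by rewrite ler_pM2l.
have k3 : (1 + eps) * f (alg S2) <= (1 + eps) * f (alg (S2 ++ S3)).
  by rewrite ler_pM2l // addr_gt0.
have k4 : c * f O123 <= c * f X + c * f Y by rewrite -mulrDr ler_pM2l.
have e2 : 0 < 2 + eps by rewrite addr_gt0.
rewrite mulrAC ler_pdivrMr //.
nra.
Qed.
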